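(* Let $m,n\geq2$, let $\mathbf p\in\mathbb R^m$, $\mathbf q\in\mathbb R^n$ be probability vectors with all entries strictly positive, and let $\Psi$ be strict Schur-concave on $\mathcal C(\mathbf p,\mathbf q)$. Let $P\in\mathcal C(\mathbf p,\mathbf q)$, and let $A=(a_{s,t})_{2\times2}$ with $a_{s,t}=p_{i_s,j_t}$ be a $2\times2$ submatrix of $P$ (distinct rows $i_1,i_2$, distinct columns $j_1,j_2$) with $\max(a_{1,1},a_{2,2})\geq\max(a_{1,2},a_{2,1})$. Let $b=\min(a_{1,2},a_{2,1})$, let $A'$ have entries $a'_{s,s}=a_{s,s}+b$ ($s=1,2$), $a'_{1,2}=a_{1,2}-b$, $a'_{2,1}=a_{2,1}-b$, and let $P'$ be obtained from $P$ by replacing $A$ with $A'$. Then $P'\in\mathcal C(\mathbf p,\mathbf q)$ and, as vectors in $\mathbb R^{mn}$, $P\preceq P'$, hence $\Psi(P')\leq\Psi(P)$. In particular, if $b>0$ then $P\prec P'$ and $\Psi(P')<\Psi(P)$.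
   Context: $\mathcal C(\mathbf p,\mathbf q)$: nonnegative $m\times n$ matrices with row sums $p_i$, column sums $q_j$, viewed as vectors in $\mathbb R^{mn}$. Majorization: for $x,y\in\mathbb R^N$ with decreasing rearrangements $\bar x,\bar y$ and $F_{\bar x}(i)=\sum_{k\le i}\bar x_k$, $x\preceq y$ if $F_{\bar x}(i)\le F_{\bar y}(i)$ for $1\le i<N$ and $F_{\bar x}(N)=F_{\bar y}(N)$; $x\prec y$ if moreover strict inequality holds for some $i<N$. $\Psi$ (symmetric) is strict Schur-concave if $x\preceq y$ implies $\Psi(x)\ge\Psi(y)$ and $x\prec y$ implies $\Psi(x)>\Psi(y)$. *)

(* Defs.v *)
From HB Require Import structures.
From mathcomp Require Import all_boot all_order all_algebra.
Set Implicit Arguments. Unset Strict Implicit. Unset Printing Implicit Defensive.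
Import Order.TTheory GRing.Theory Num.Theory.
Local Open Scope ring_scope.

Definition transport_poly (R : realFieldType) (m n : nat)
  (p : 'I_m -> R) (q : 'I_n -> R) (P : 'M[R]_(m, n)) : Prop :=
  (forall i j, 0 <= P i j) /\
  (forall i, \sum_(j < n) P i j = p i) /\
  (forall j, \sum_(i < m) P i j = q j).

Definition entries (R : realFieldType) (N : nat) (x : 'rV[R]_N) : seq R :=
  [seq x 0 k | k <- enum 'I_N].

Definition decr (R : realFieldType) (N : nat) (x : 'rV[R]_N) : seq R :=
  sort (fun a b : R => b <= a) (entries x).

Definition Fbar (R : realFieldType) (N : nat) (x : 'rV[R]_N) (i : nat) : R :=
  \sum_(k < i) nth 0 (decr x) k.

Definition majorized (R : realFieldType) (N : nat) (x y : 'rV[R]_N) : Prop :=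
  (forall i : nat, (1 <= i < N)%N -> Fbar x i <= Fbar y i) /\
  Fbar x N = Fbar y N.

Definition strictly_majorized (R : realFieldType) (N : nat) (x y : 'rV[R]_N)
  : Prop :=
  majorized x y /\ exists i : nat, (1 <= i < N)%N /\ Fbar x i < Fbar y i.

Definition strict_schur_concave_on (R : realFieldType) (m n : nat)
  (C : 'M[R]_(m, n) -> Prop) (Psi : 'M[R]_(m, n) -> R) : Prop :=
  (forall X Y, C X -> C Y -> majorized (mxvec X) (mxvec Y) -> Psi Y <= Psi X) /\
  (forall X Y, C X -> C Y -> strictly_majorized (mxvec X) (mxvec Y) ->
     Psi Y < Psi X).

Definition shift2x2 (R : realFieldType) (m n : nat) (P : 'M[R]_(m, n))
  (i1 i2 : 'I_m) (j1 j2 : 'I_n) : 'M[R]_(m, n) :=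
  let b := Num.min (P i1 j2) (P i2 j1) in
  \matrix_(i, j)
    if (i == i1) && (j == j1) then P i j + b
    else if (i == i2) && (j == j2) then P i j + b
    else if (i == i1) && (j == j2) then P i j - b
    else if (i == i2) && (j == j1) then P i j - b
    else P i j.

(* Main.v *)
Require Import Defs.
From HB Require Import structures.
From mathcomp Require Import all_boot all_order all_algebra.
From mathcomp Require Import fingroup perm ring lra.
Set Implicit Arguments. Unset Strict Implicit. Unset Printing Implicit Defensive.
Import Order.TTheory GRing.Theory Num.Theory.
Local Open Scope ring_scope.

Section Maj.
Variable R : realFieldType.

Lemma size_entries N (x : 'rV[R]_N) : size (entries x) = N.
Proof. by rewrite /entries size_map size_enum_ord. Qed.

Lemma nth_entries N (x : 'rV[R]_N) (i : 'I_N) : nth 0 (entries x) i = x 0 i.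
Proof.
by rewrite /entries (nth_map i) ?size_enum_ord // nth_ord_enum.
Qed.

Lemma size_decr N (x : 'rV[R]_N) : size (decr x) = N.
Proof. by rewrite /decr size_sort size_entries. Qed.

Lemma decr_sorted N (x : 'rV[R]_N) : sorted (fun a b : R => b <= a) (decr x).
Proof. apply: sort_sorted => a b; exact: le_total. Qed.

Lemma decr_perm N (x : 'rV[R]_N) :
  exists s : 'S_N, forall i, x 0 i = nth 0 (decr x) (s i).
Proof.
have hs : size (decr x) == N by rewrite size_decr.
pose t : N.-tuple R := Tuple hs.
have : perm_eq (entries x) t by rewrite /= /decr perm_sym perm_sort.
case/tuple_permP => s hE; exists s => i.
rewrite -nth_entries hE /= (nth_map i) ?size_enum_ord // nth_ord_enum.
by rewrite (tnth_nth 0).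
Qed.

Lemma card_lt N k : (k <= N)%N -> #|[set j : 'I_N | (j < k)%N]| = k.
Proof.
move=> hk; rewrite -sum1_card.
rewrite (eq_bigl (fun j : 'I_N => (j < k)%N)); last by move=> j; rewrite inE.
by rewrite -(big_ord_widen N (fun _ => 1%N)) // sum1_card card_ord.
Qed.

Lemma threshold N (d : seq R) (B : {set 'I_N}) k :
  sorted (fun a b : R => b <= a) d -> size d = N -> #|B| = k -> (k <= N)%N ->
  \sum_(j in B) nth 0 d j <= \sum_(j : 'I_N | (j < k)%N) nth 0 d j.
Proof.
move=> hs hsz hB hk.
pose C := [set j : 'I_N | (j < k)%N].
have hC : #|C| = k by exact: card_lt.
rewrite [X in _ <= X](eq_bigl (fun j => j \in C)); last by move=> j; rewrite inE.
rewrite (big_setID C) [X in _ <= X](big_setID B) /= [C :&: B]setIC lerD2l.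
case: (posnP k) => [k0|kpos].
  have -> : B :\: C = set0.
    by apply/setP => j; rewrite !inE; move: hB; rewrite k0 => /cards0_eq ->; rewrite inE.
  have -> : C :\: B = set0.
    by apply/setP => j; rewrite !inE k0 ltn0 andbF.
  by rewrite !big_set0.
pose t := nth 0 d k.-1.
have tr : transitive (fun a b : R => b <= a) by move=> a b c h1 h2; exact: le_trans h2 h1.
have rf : reflexive (fun a b : R => b <= a) by move=> a; exact: lexx.
apply: (@le_trans _ _ (\sum_(j in B :\: C) t)).
  apply: ler_sum => j; rewrite !inE -leqNgt => /andP [hj _].
  apply: (sorted_leq_nth tr rf 0 hs); rewrite ?inE ?hsz //.
  - by rewrite (leq_trans _ hk) // prednK ?leqnn.
  - by rewrite (leq_trans _ hj) // leq_pred.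
apply: (@le_trans _ _ (\sum_(j in C :\: B) t)).
  rewrite !sumr_const; rewrite le_eqVlt; apply/orP; left; apply/eqP; congr (_ *+ _).
  have h1 := cardsID C B; have h2 := cardsID B C.
  rewrite setIC in h2; move: h1 h2; rewrite hB hC => h1 h2.
  by apply/eqP; rewrite -(eqn_add2l #|B :&: C|) h1 h2.
apply: ler_sum => j; rewrite !inE => /andP [_ hj].
apply: (sorted_leq_nth tr rf 0 hs); rewrite ?inE ?hsz //.
- by rewrite (leq_trans _ hk) // prednK ?leqnn.
- by rewrite -ltnS prednK.
Qed.

Lemma Fbar_widen N (x : 'rV[R]_N) k : (k <= N)%N ->
  Fbar x k = \sum_(j : 'I_N | (j < k)%N) nth 0 (decr x) j.
Proof. by move=> hk; rewrite /Fbar (big_ord_widen N (fun j => nth 0 (decr x) j)). Qed.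

Lemma topk_ge N (x : 'rV[R]_N) (A : {set 'I_N}) k : #|A| = k -> (k <= N)%N ->
  \sum_(i in A) x 0 i <= Fbar x k.
Proof.
move=> hA hk; have [s hs] := decr_perm x.
rewrite Fbar_widen // (eq_bigr (fun i => nth 0 (decr x) (s i))) //.
rewrite -(big_imset (fun j : 'I_N => nth 0 (decr x) j)); last by move=> i j _ _; exact: perm_inj.
apply: threshold => //; [exact: decr_sorted | exact: size_decr|].
by rewrite card_imset //; exact: perm_inj.
Qed.

Lemma topk_attained N (x : 'rV[R]_N) k : (k <= N)%N ->
  exists A : {set 'I_N}, #|A| = k /\ \sum_(i in A) x 0 i = Fbar x k.
Proof.
move=> hk; have [s hs] := decr_perm x.
exists [set i | (s i < k)%N]; split.
  transitivity #|[set j : 'I_N | (j < k)%N]|; last exact: card_lt.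
  rewrite -(card_imset _ (@perm_inj _ s)).
  suff -> : [set s x | x in [set i | (s i < k)%N]] = [set j : 'I_N | (j < k)%N] by [].
  apply/setP => j; rewrite [RHS]inE; apply/imsetP/idP.
    by case=> i; rewrite inE => hi ->.
  by move=> hj; exists (s^-1 j)%g; rewrite ?inE permKV.
rewrite Fbar_widen // [RHS](reindex_inj (@perm_inj _ s)) /=.
by apply: eq_big => i; rewrite ?inE // hs.
Qed.

Lemma Fbar_N N (x : 'rV[R]_N) : Fbar x N = \sum_i x 0 i.
Proof.
have [A [hA <-]] := topk_attained x (leqnn N).
suff -> : A = setT by apply: eq_bigl => i; rewrite inE.
by apply/eqP; rewrite eqEcard subsetT cardsT /= card_ord hA leqnn.
Qed.


Lemma max_ge_l (a b : R) : a <= Num.max a b.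
Proof. by rewrite le_max lexx. Qed.
Lemma max_ge_r (a b : R) : b <= Num.max a b.
Proof. by rewrite le_max lexx orbT. Qed.

Lemma one_side N (x y : 'rV[R]_N) (u v : 'I_N) (A : {set 'I_N}) :
  u != v -> (forall w, w != u -> w != v -> y 0 w = x 0 w) ->
  Num.max (x 0 u) (x 0 v) <= Num.max (y 0 u) (y 0 v) ->
  u \in A -> v \notin A ->
  exists A' : {set 'I_N}, #|A'| = #|A| /\ \sum_(i in A) x 0 i <= \sum_(i in A') y 0 i.
Proof.
move=> huv hrest hmax huA hvA.
have [w [hwuv hw]] : exists w, (w == u) || (w == v) /\ x 0 u <= y 0 w.
  case: (leP (y 0 u) (y 0 v)) hmax => hy hmax.
  - exists v; rewrite eqxx orbT; split => //.
    by apply: le_trans (max_ge_l _ (x 0 v)) hmax.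
  - exists u; rewrite eqxx; split => //.
    by apply: le_trans (max_ge_l _ (x 0 v)) hmax.
have hwA : w \notin A :\ u.
  rewrite !inE negb_and negbK; case/orP: hwuv => /eqP ->; first by rewrite eqxx.
  by rewrite (negbTE hvA) orbT.
exists (w |: (A :\ u)); split.
  by rewrite cardsU1 hwA (cardsD1 u A) huA.
rewrite (big_setD1 u huA) big_setU1 //= lerD //.
rewrite le_eqVlt; apply/orP; left; apply/eqP; apply: eq_bigr => i; rewrite !inE => /andP [hiu hiA].
symmetry; apply: hrest => //; apply: contraNneq hvA => <-; exact: hiA.
Qed.

Definition sq N (x : 'rV[R]_N) := \sum_i (x 0 i) ^+ 2.

Lemma sq_decr N (x : 'rV[R]_N) : sq x = \sum_(j < N) (nth 0 (decr x) j) ^+ 2.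
Proof.
have [s hs] := decr_perm x.
rewrite /sq [RHS](reindex_inj (@perm_inj _ s)) /=.
by apply: eq_bigr => i _; rewrite hs.
Qed.

Lemma eq_sq N (x y : 'rV[R]_N) :
  (forall k, (k <= N)%N -> Fbar x k = Fbar y k) -> sq x = sq y.
Proof.
move=> h; rewrite !sq_decr; apply: eq_bigr => j _.
have e : forall z : 'rV[R]_N, nth 0 (decr z) j = Fbar z j.+1 - Fbar z j.
  by move=> z; rewrite /Fbar big_ord_recr /= addrC addrK.
rewrite (e x) (e y) (h j.+1) ?(h j) // ltnW //.
Qed.

Lemma sq_max (a b : R) :
  a ^+ 2 + b ^+ 2 = (Num.max a b) ^+ 2 + (a + b - Num.max a b) ^+ 2 /\
  a + b <= 2 * Num.max a b.
Proof.
case: (leP a b) => h; split; rewrite ?addrK ?addrA ?(addrC a) ?addKr ?addrK //;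
  try ring; lra.
Qed.

Lemma sq_ineq (a b c d : R) : a + b = c + d -> Num.max a b <= Num.max c d ->
  a ^+ 2 + b ^+ 2 <= c ^+ 2 + d ^+ 2 /\
  (Num.max a b < Num.max c d -> a ^+ 2 + b ^+ 2 < c ^+ 2 + d ^+ 2).
Proof.
move=> hs hm; have [e1 h1] := sq_max a b; have [e2 h2] := sq_max c d.
rewrite e1 e2 -hs; move: hm h1 h2; rewrite -hs.
set M1 := Num.max a b; set M2 := Num.max c d; set S := a + b => hm h1 h2.
have E : M2 ^+ 2 + (S - M2) ^+ 2 - (M1 ^+ 2 + (S - M1) ^+ 2) =
  2 * ((M2 - M1) * (M1 + M2 - S)) by ring.
split.
  rewrite -subr_ge0 E mulr_ge0 // mulr_ge0 //; [by rewrite subr_ge0 | lra].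
move=> hlt; rewrite -subr_gt0 E mulr_gt0 // mulr_gt0 //; [by rewrite subr_gt0 | lra].
Qed.


Lemma sum_split N (f : 'I_N -> R) (A : {set 'I_N}) u v : u != v -> u \in A -> v \in A ->
  \sum_(i in A) f i = f u + f v + \sum_(i in (A :\ u) :\ v) f i.
Proof.
move=> huv huA hvA; rewrite (big_setD1 u huA) (big_setD1 v) /=; first by rewrite addrA.
by rewrite !inE eq_sym huv.
Qed.

Lemma sumT N (f : 'I_N -> R) : \sum_(i in [set: 'I_N]) f i = \sum_i f i.
Proof. by apply: eq_bigl => i; rewrite inE. Qed.

Lemma vec_ttrans N (x y : 'rV[R]_N) (u v : 'I_N) :
  u != v -> (forall w, w != u -> w != v -> y 0 w = x 0 w) ->
  x 0 u + x 0 v = y 0 u + y 0 v ->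
  Num.max (x 0 u) (x 0 v) <= Num.max (y 0 u) (y 0 v) ->
  majorized x y /\ sq x <= sq y /\
  (Num.max (x 0 u) (x 0 v) < Num.max (y 0 u) (y 0 v) -> sq x < sq y).
Proof.
move=> huv hrest hs hm.
have key : forall k, (k <= N)%N -> Fbar x k <= Fbar y k.
  move=> k hk; have [A [hA <-]] := topk_attained x hk.
  have fin : forall A' : {set 'I_N}, #|A'| = k -> \sum_(i in A) x 0 i <= \sum_(i in A') y 0 i ->
      \sum_(i in A) x 0 i <= Fbar y k.
    by move=> A' hA' h; apply: le_trans h (topk_ge y hA' hk).
  have same : forall B : {set 'I_N}, u \notin B -> v \notin B ->
      \sum_(i in B) y 0 i = \sum_(i in B) x 0 i.
    move=> B huB hvB; apply: eq_bigr => i hi; apply: hrest.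
    - by apply: contraNneq huB => <-.
    - by apply: contraNneq hvB => <-.
  case huA: (u \in A); case hvA: (v \in A).
  - apply: (fin A) => //; rewrite !(sum_split _ huv huA hvA) hs same ?lexx //.
    + by rewrite !inE eqxx andbF.
    + by rewrite !inE eqxx.
  - have [A' [hA' h]] := one_side huv hrest hm huA (negbT hvA).
    by apply: (fin A'); rewrite ?hA'.
  - have hrest' : forall w, w != v -> w != u -> y 0 w = x 0 w.
      by move=> w h1 h2; apply: hrest.
    have hm' : Num.max (x 0 v) (x 0 u) <= Num.max (y 0 v) (y 0 u) by rewrite maxC [X in _ <= X]maxC.
    have hvu : v != u by rewrite eq_sym.
    have [A' [hA' h]] := one_side hvu hrest' hm' hvA (negbT huA).
    by apply: (fin A'); rewrite ?hA'.
  - apply: (fin A) => //; rewrite same ?lexx //; by rewrite ?huA ?hvA.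
have hN : Fbar x N = Fbar y N.
  rewrite !Fbar_N -!sumT !(sum_split _ huv (in_setT u) (in_setT v)) hs.
  congr (_ + _); apply: eq_bigr => i; rewrite !inE => /andP [h1 /andP [h2 _]].
  by rewrite hrest.
have [q1 q2] := sq_ineq hs hm.
have ssplit : forall z : 'rV[R]_N, sq z = z 0 u ^+ 2 + z 0 v ^+ 2 +
    \sum_(i in ([set: 'I_N] :\ u) :\ v) z 0 i ^+ 2.
  move=> z; rewrite /sq -(sum_split (fun i => z 0 i ^+ 2) huv (in_setT u) (in_setT v)).
  by apply: eq_bigl => i; rewrite inE.
have rest : \sum_(i in ([set: 'I_N] :\ u) :\ v) x 0 i ^+ 2 =
    \sum_(i in ([set: 'I_N] :\ u) :\ v) y 0 i ^+ 2.
  apply: eq_bigr => i; rewrite !inE => /andP [h1 /andP [h2 _]].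
  by rewrite hrest.
split; [split|split].
- by move=> i /andP [_ hi]; apply: key; rewrite ltnW.
- exact: hN.
- by rewrite !ssplit rest lerD2r.
- by move=> hlt; rewrite !ssplit rest ltrD2r; apply: q2.
Qed.


Lemma mx_ttrans m n (X Y : 'M[R]_(m, n)) (pu pv : 'I_m * 'I_n) :
  pu != pv ->
  (forall i j, (i, j) != pu -> (i, j) != pv -> Y i j = X i j) ->
  X pu.1 pu.2 + X pv.1 pv.2 = Y pu.1 pu.2 + Y pv.1 pv.2 ->
  Num.max (X pu.1 pu.2) (X pv.1 pv.2) <= Num.max (Y pu.1 pu.2) (Y pv.1 pv.2) ->
  majorized (mxvec X) (mxvec Y) /\ sq (mxvec X) <= sq (mxvec Y) /\
  (Num.max (X pu.1 pu.2) (X pv.1 pv.2) < Num.max (Y pu.1 pu.2) (Y pv.1 pv.2) ->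
    sq (mxvec X) < sq (mxvec Y)).
Proof.
case: pu => iu ju; case: pv => iv jv /= huv hrest hs hm.
have := @vec_ttrans _ (mxvec X) (mxvec Y) (mxvec_index iu ju) (mxvec_index iv jv).
rewrite !mxvecE; apply => //.
  by apply: contraNneq huv => /cast_ord_inj/enum_rank_inj ->.
move=> w; case/mxvec_indexP: w => i j h1 h2; rewrite !mxvecE; apply: hrest.
- by apply: contraNneq h1 => [[-> ->]].
- by apply: contraNneq h2 => [[-> ->]].
Qed.

Lemma strict_of_sq N (x y : 'rV[R]_N) :
  majorized x y -> sq x < sq y -> strictly_majorized x y.
Proof.
move=> [hle hN] hsq; split => //.
case: (boolP [exists i : 'I_N, (1 <= i)%N && (Fbar x i < Fbar y i)]).
  by case/existsP => i /andP [h1 h2]; exists i; rewrite h1 ltn_ord h2.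
rewrite negb_exists => /forallP hall.
suff : sq x = sq y by move=> e; move: hsq; rewrite e ltxx.
apply: eq_sq => k hk.
case: k hk => [|k] hk; first by rewrite /Fbar !big_ord0.
case: (ltnP k.+1 N) => hkN.
  have := hall (Ordinal hkN); rewrite /= => hn.
  have := hle k.+1 hkN; rewrite le_eqVlt (negbTE hn) orbF => /eqP //.
by have -> : k.+1 = N by apply/eqP; rewrite eqn_leq hk hkN.
Qed.

Definition ind m n (p : 'I_m * 'I_n) (i : 'I_m) (j : 'I_n) : R := ((i, j) == p)%:R.

Lemma core m n (X Y : 'M[R]_(m, n)) (pa pb pc pd : 'I_m * 'I_n) (t : R) :
  pa != pb -> pa != pc -> pa != pd -> pb != pc -> pb != pd -> pc != pd ->
  (forall i j, Y i j = X i j + t * (ind pa i j + ind pb i j - ind pc i j - ind pd i j)) ->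
  0 <= X pb.1 pb.2 -> t = X pd.1 pd.2 -> X pc.1 pc.2 <= X pa.1 pa.2 -> 0 <= t ->
  majorized (mxvec X) (mxvec Y) /\ (0 < t -> strictly_majorized (mxvec X) (mxvec Y)).
Proof.
case: pa => a1 a2; case: pb => b1 b2; case: pc => c1 c2; case: pd => d1 d2 /=.
move=> hab hac had hbc hbd hcd hY hb ht hca ht0.
pose Q := \matrix_(i, j) (X i j + t * (ind (a1, a2) i j - ind (c1, c2) i j)).
have F := (negbTE hab, negbTE hac, negbTE had, negbTE hbc, negbTE hbd, negbTE hcd).
have hba := hab; have hca' := hac; have hda := had; have hcb := hbc; have hdb := hbd; have hdc := hcd.
rewrite eq_sym in hba; rewrite eq_sym in hca'; rewrite eq_sym in hda.
rewrite eq_sym in hcb; rewrite eq_sym in hdb; rewrite eq_sym in hdc.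
have G := (negbTE hba, negbTE hca', negbTE hda, negbTE hcb, negbTE hdb, negbTE hdc).
have r1 : forall i j, (i, j) != (a1, a2) -> (i, j) != (c1, c2) -> Q i j = X i j.
  by move=> i j h1 h2; rewrite mxE /ind (negbTE h1) (negbTE h2) /= subrr mulr0 addr0.
have r2 : X a1 a2 + X c1 c2 = Q a1 a2 + Q c1 c2.
  rewrite !mxE /ind !eqxx ?F ?G /=; ring.
have Qa : Q a1 a2 = X a1 a2 + t by rewrite !mxE /ind !eqxx ?F /=; ring.
have Qb : Q b1 b2 = X b1 b2 by rewrite !mxE /ind ?F ?G /=; ring.
have Qd : Q d1 d2 = X d1 d2 by rewrite !mxE /ind ?F ?G /=; ring.
have Yb : Y b1 b2 = X b1 b2 + t by rewrite hY /ind !eqxx ?F ?G /=; ring.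
have Yd : Y d1 d2 = 0 by rewrite hY /ind !eqxx ?F ?G /= -ht; ring.
have mx1 : Num.max (X a1 a2) (X c1 c2) = X a1 a2 by rewrite max_l.
have r3 : Num.max (X a1 a2) (X c1 c2) <= Num.max (Q a1 a2) (Q c1 c2).
  by rewrite mx1; apply: le_trans (max_ge_l _ _); rewrite Qa lerDl.
have [[m1a m1b] [s1 s1s]] := mx_ttrans hac r1 r2 r3.
have q1 : forall i j, (i, j) != (b1, b2) -> (i, j) != (d1, d2) -> Y i j = Q i j.
  by move=> i j h1 h2; rewrite hY mxE /ind (negbTE h1) (negbTE h2) /=; ring.
have q2 : Q b1 b2 + Q d1 d2 = Y b1 b2 + Y d1 d2 by rewrite Qb Qd Yb Yd -ht; ring.
have q3 : Num.max (Q b1 b2) (Q d1 d2) <= Num.max (Y b1 b2) (Y d1 d2).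
  rewrite Qb Qd Yb -ht; apply: le_trans (max_ge_l _ _).
  by rewrite ge_max lerDl ht0 lerDr hb.
have [[m2a m2b] [s2 _]] := mx_ttrans hbd q1 q2 q3.
have maj : majorized (mxvec X) (mxvec Y).
  split; last by rewrite m1b m2b.
  by move=> i hi; apply: le_trans (m1a i hi) (m2a i hi).
split => // tpos; apply: strict_of_sq => //.
apply: lt_le_trans s2; apply: s1s.
by rewrite mx1; apply: lt_le_trans (max_ge_l _ _); rewrite Qa ltrDl.
Qed.

End Maj.

Section Main.
Variable R : realFieldType.

Lemma sum_ind_row m n (a1 : 'I_m) (a2 : 'I_n) (i : 'I_m) :
  \sum_(j < n) ind R (a1, a2) i j = (i == a1)%:R.
Proof.
rewrite (bigD1 a2) //= /ind xpair_eqE eqxx andbT big1 ?addr0 // => j hj.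
by rewrite xpair_eqE (negbTE hj) andbF.
Qed.

Lemma sum_ind_col m n (a1 : 'I_m) (a2 : 'I_n) (j : 'I_n) :
  \sum_(i < m) ind R (a1, a2) i j = (j == a2)%:R.
Proof.
rewrite (bigD1 a1) //= /ind xpair_eqE eqxx /= big1 ?addr0 // => i hi.
by rewrite xpair_eqE (negbTE hi).
Qed.

End Main.

Unset Implicit Arguments.

Theorem lemma4p1 (R : realFieldType) (m n : nat)
  (p : 'I_m -> R) (q : 'I_n -> R) (Psi : 'M[R]_(m, n) -> R)
  (P : 'M[R]_(m, n)) (i1 i2 : 'I_m) (j1 j2 : 'I_n) :
  (2 <= m)%N -> (2 <= n)%N ->
  (forall i, 0 < p i) -> \sum_(i < m) p i = 1 ->
  (forall j, 0 < q j) -> \sum_(j < n) q j = 1 ->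
  strict_schur_concave_on (transport_poly p q) Psi ->
  transport_poly p q P ->
  i1 != i2 -> j1 != j2 ->
  Num.max (P i2 j1) (P i1 j2) <= Num.max (P i1 j1) (P i2 j2) ->
  let b := Num.min (P i1 j2) (P i2 j1) in
  let P' := shift2x2 P i1 i2 j1 j2 in
  [/\ transport_poly p q P',
      majorized (mxvec P) (mxvec P'),
      Psi P' <= Psi P &
      (0 < b -> strictly_majorized (mxvec P) (mxvec P') /\ Psi P' < Psi P)].
Proof.
move=> _ _ _ _ _ _ [schur1 schur2] [hP0 [hPr hPc]] hi hj hmax b P'.
have hi' : i2 != i1 by rewrite eq_sym.
have hj' : j2 != j1 by rewrite eq_sym.
have shiftE : forall i j, P' i j = P i j + b *
    (ind R (i1, j1) i j + ind R (i2, j2) i j - ind R (i1, j2) i j - ind R (i2, j1) i j).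
  move=> i j; rewrite /P' /shift2x2 mxE -/b /ind !xpair_eqE.
  have [e1|n1] := eqVneq i i1; have [e2|n2] := eqVneq i i2;
  have [e3|n3] := eqVneq j j1; have [e4|n4] := eqVneq j j2; rewrite /=; try ring.
  all: try (subst; (by rewrite eqxx in hi) || (by rewrite eqxx in hj)).
have hb0 : 0 <= b by rewrite /b le_min !hP0.
have hb12 : b <= P i1 j2 by rewrite /b ge_min lexx.
have hb21 : b <= P i2 j1 by rewrite /b ge_min lexx orbT.
have tp : transport_poly p q P'.
  split; [|split].
  - move=> i j; rewrite /P' /shift2x2 mxE -/b.
    case: ifP => _; first by rewrite addr_ge0.
    case: ifP => _; first by rewrite addr_ge0.
    case: ifP => [/andP [/eqP -> /eqP ->]|_]; first by rewrite subr_ge0.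
    case: ifP => [/andP [/eqP -> /eqP ->]|_]; first by rewrite subr_ge0.
    exact: hP0.
  - move=> i; rewrite -hPr (eq_bigr _ (fun j _ => shiftE i j)) big_split /=.
    rewrite -mulr_sumr !sumrB big_split /= !sum_ind_row; ring.
  - move=> j; rewrite -hPc (eq_bigr _ (fun i _ => shiftE i j)) big_split /=.
    rewrite -mulr_sumr !sumrB big_split /= !sum_ind_col; ring.
have ne : forall (a c : 'I_m) (a' c' : 'I_n), (a != c) || (a' != c') -> (a, a') != (c, c').
  by move=> a c a' c'; rewrite xpair_eqE negb_and.
have main : majorized (mxvec P) (mxvec P') /\
    (0 < b -> strictly_majorized (mxvec P) (mxvec P')).
  case: (leP (P i1 j1) (P i2 j2)) hmax => hd; case: (leP (P i1 j2) (P i2 j1)) => ho hmax.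
  - apply: (core (pa := (i2, j2)) (pb := (i1, j1)) (pc := (i2, j1)) (pd := (i1, j2)));
      rewrite /= ?ne ?hi ?hj ?hi' ?hj' ?orbT //.
    all: try by move=> i j; rewrite shiftE; ring.
    all: try by apply: hP0.
    all: try by rewrite /b min_l.
    all: try by rewrite /b min_r // ltW.
  - apply: (core (pa := (i2, j2)) (pb := (i1, j1)) (pc := (i1, j2)) (pd := (i2, j1)));
      rewrite /= ?ne ?hi ?hj ?hi' ?hj' ?orbT //.
    all: try by move=> i j; rewrite shiftE; ring.
    all: try by apply: hP0.
    all: try by rewrite /b min_l.
    all: try by rewrite /b min_r // ltW.
  - apply: (core (pa := (i1, j1)) (pb := (i2, j2)) (pc := (i2, j1)) (pd := (i1, j2)));
      rewrite /= ?ne ?hi ?hj ?hi' ?hj' ?orbT //.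
    all: try by move=> i j; rewrite shiftE; ring.
    all: try by apply: hP0.
    all: try by rewrite /b min_l.
    all: try by rewrite /b min_r // ltW.
  - apply: (core (pa := (i1, j1)) (pb := (i2, j2)) (pc := (i1, j2)) (pd := (i2, j1)));
      rewrite /= ?ne ?hi ?hj ?hi' ?hj' ?orbT //.
    all: try by move=> i j; rewrite shiftE; ring.
    all: try by apply: hP0.
    all: try by rewrite /b min_l.
    all: try by rewrite /b min_r // ltW.
have [hmaj hstr] := main.
have hTP : transport_poly p q P by split.
split => //.
- exact: schur1.
- move=> hb; have hs := hstr hb; split => //; exact: schur2.
Qed.
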